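(* Let $(X,\mathcal{A})$ be a cross resolvable design with $r$ parallel classes and $b_r$ blocks per parallel class, and let $z\in\{2,\dots,r\}$ be such that $\mu_z$ exists. In the multi-access coded caching scheme described in the context, with distinct demands, at the end of all transmissions of the delivery phase every user $m$ can recover all subfiles of its demanded file $W_{d_m}$ (using the transmissions and the contents of the caches it is connected to).
   Context: A resolvable design $(X,\mathcal{A})$: $X$ a finite set of $v$ points, $\mathcal{A}$ a collection of $b$ blocks each of size $k$, partitioned into $r$ parallel classes, each being a set of $b_r=v/k$ pairwise disjoint blocks with union $X$. $\mu_z$ exists if $|B_1\cap\cdots\cap B_z|$ equals the same nonzero value $\mu_z$ for every choice of blocks from $z$ distinct parallel classes. Users: one user $U_H$ for each set $H$ of $z$ blocks from $z$ distinct parallel classes, connected to the caches of those blocks (one cache per block). Placement: each file $W_i$ ($i\in[N]$) is split into subfiles $W_{i,x}$, $x\in X$; the cache of block $A_j$ stores $W_{i,x}$ for $x\in A_j$ and all $i$. Delivery: user $m$ demands $W_{d_m}$. For each choice of $z$ parallel classes $\mathcal{P}_1,\dots,\mathcal{P}_z$ and each choice of a pair of distinct blocks $\{C_{s,i_s},C_{s,j_s}\}\subseteq\mathcal{P}_s$ for every $s\in[z]$, let $\mathcal{X}$ be the $2^z$ users whose caches consist of one block from each chosen pair; for $m\in\mathcal{X}$ connected to $C_{1,a_1},\dots,C_{z,a_z}$, with $e_s$ the other index of $\{i_s,j_s\}$, put $f_m=C_{1,e_1}\cap\cdots\cap C_{z,e_z}=\{y_{m,1},\dots,y_{m,\mu_z}\}$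 (fixed ordering), and broadcast $\bigoplus_{m\in\mathcal{X}}W_{d_m,y_{m,s}}$ for each $s\in[\mu_z]$. *)

(* Defs.v *)
From HB Require Import structures.
From mathcomp Require Import all_boot all_order all_algebra.
Set Implicit Arguments. Unset Strict Implicit. Unset Printing Implicit Defensive.
Import GRing.Theory.

(* A block is indexed by (parallel class, position in class). *)
Definition blk (r br : nat) := ('I_r * 'I_br)%type.

Definition resolvable (X : finType) (r br k : nat) (B : 'I_r -> 'I_br -> {set X}) : Prop :=
  [/\ 0 < k,
      (forall i j, #|B i j| = k),
      (forall i j j', j != j' -> [disjoint B i j & B i j']) &
      (forall i, \bigcup_(j < br) B i j = [set: X])].

Definition mu_exists (X : finType) (r br : nat) (B : 'I_r -> 'I_br -> {set X})
  (z mu : nat) : Prop :=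
  0 < mu /\ forall (S : {set 'I_r}) (f : 'I_r -> 'I_br),
    #|S| = z -> #|\bigcap_(i in S) B i (f i)| = mu.

Definition classes (r br : nat) (H : {set blk r br}) : {set 'I_r} := [set p.1 | p in H].

Definition is_user (r br z : nat) (H : {set blk r br}) : bool :=
  (#|H| == z) && (#|classes H| == z).

Definition is_group (r br z : nat) (Q : {set blk r br}) : bool :=
  (#|classes Q| == z) &&
  [forall i in classes Q, #|[set p in Q | p.1 == i]| == 2].

Definition users_of (r br z : nat) (Q : {set blk r br}) : {set {set blk r br}} :=
  [set m | is_user z m & m \subset Q].

(* points whose subfiles are in the caches connected to user H *)
Definition cached (X : finType) (r br : nat) (B : 'I_r -> 'I_br -> {set X})
  (H : {set blk r br}) : {set X} := \bigcup_(p in H) B p.1 p.2.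

Definition fset_of (X : finType) (r br : nat) (B : 'I_r -> 'I_br -> {set X})
  (Q m : {set blk r br}) : {set X} := \bigcap_(p in Q :\: m) B p.1 p.2.

(* the s-th transmission of group Q: XOR (sum over F_2) of W_{d_m, y_{m,s}} *)
Definition transmission (X : finType) (r br z N F mu : nat)
  (W : 'I_N -> X -> 'rV['F_2]_F) (d : {set blk r br} -> 'I_N)
  (y : {set blk r br} -> {set blk r br} -> 'I_mu -> X)
  (Q : {set blk r br}) (s : 'I_mu) : 'rV['F_2]_F :=
  \sum_(m in users_of z Q) W (d m) (y Q m s).

(* Main.v *)
Require Import Defs.
From HB Require Import structures.
From mathcomp Require Import all_boot all_order all_algebra.
Import GRing.Theory.

Theorem lemma8 (X : finType) (r br k z mu N F : nat)
  (B : 'I_r -> 'I_br -> {set X})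
  (d : {set blk r br} -> 'I_N)
  (y : {set blk r br} -> {set blk r br} -> 'I_mu -> X) :
  @resolvable X r br k B ->
  (2 <= z <= r) ->
  @mu_exists X r br B z mu ->
  {in [pred H | is_user z H] &, injective d} ->
  (forall Q m, is_group z Q -> m \in users_of z Q ->
     [set y Q m s | s : 'I_mu] = fset_of B Q m) ->
  forall H : {set blk r br}, is_user z H ->
  forall W W' : 'I_N -> X -> 'rV['F_2]_F,
    (forall n x, x \in cached B H -> W n x = W' n x) ->
    (forall Q s, is_group z Q ->
       transmission z W d y Q s = transmission z W' d y Q s) ->
    forall x, W (d H) x = W' (d H) x.
Proof.
move=> [_ _ Hdis Hcov] _ _ _ hy H uH W W' Hc Htr x.
have [xc|hx] := boolP (x \in cached B H); first exact: Hc.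
have uH' := uH; move/andP: uH' => [/eqP cH /eqP cclH].
have xin : forall i, exists j, x \in B i j.
  move=> i; have := Hcov i; move/setP/(_ x); rewrite in_setT.
  by move/bigcupP => [j _ xj]; exists j.
have uniqj : forall i j j', x \in B i j -> x \in B i j' -> j = j'.
  move=> i j j' xj xj'; case: (eqVneq j j') => // /Hdis.
  by move=> D; have := disjointFr (D i) xj; rewrite xj'.
have injH : {in H &, injective (fun p : blk r br => p.1)}.
  apply/imset_injP; rewrite -/(classes H) cH cclH //.
have nxH : forall p, p \in H -> x \notin B p.1 p.2.
  move=> p pH; apply: contra hx => xp; apply/bigcupP; by exists p.
set E := [set p : blk r br | (p.1 \in classes H) && (x \in B p.1 p.2)].
set Q := H :|: E.
have clQ : classes Q = classes H.
  rewrite /classes imsetU; apply/setUidPl; apply/subsetP => i /imsetP [p pE ->].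
  by rewrite inE in pE; case/andP: pE.
have gQ : is_group z Q.
  rewrite /is_group clQ cclH eqxx /=; apply/forall_inP => i /imsetP [a aH ->].
  have [j xj] := xin a.1.
  have -> : [set p in Q | p.1 == a.1] = [set a; (a.1, j)].
    apply/setP => p; rewrite !inE; apply/idP/idP.
    - move=> /andP [/orP [pH|/andP [_ xp]] /eqP e].
      + by rewrite (injH _ _ pH aH e) eqxx.
      + apply/orP; right; rewrite e in xp; move: (uniqj _ _ _ xp xj) => e2.
        by case: p e xp e2 => [p1 p2] /= -> _ ->.
    - case/orP => /eqP ->; first by rewrite aH eqxx.
      rewrite /= eqxx xj andbT orbC /=; by rewrite andbT /classes imset_f.
  have ne : a != (a.1, j).
    apply/eqP; move: aH xj; case: a => a1 a2 /= aH xj [e]; have := nxH _ aH; by rewrite /= e xj.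
  by rewrite cards2 ne.
have HinQ : H \in users_of z Q by rewrite inE uH subsetUl.
have : x \in fset_of B Q H.
  apply/bigcapP => p; rewrite !inE => /andP [pnH /orP [pH|/andP [_ ->]]] //.
  by rewrite pH in pnH.
rewrite -hy // => /imsetP [s _ xs].
have T := Htr Q s gQ.
rewrite /transmission (bigD1 H HinQ) /= (bigD1 H HinQ) /= in T.
have S : (\sum_(m in users_of z Q | m != H) W (d m) (y Q m s))%R =
         (\sum_(m in users_of z Q | m != H) W' (d m) (y Q m s))%R.
  apply: eq_bigr => m /andP [mU mH]; apply: Hc.
  have mU' := mU; rewrite inE in mU'; case/andP: mU' => um mQ.
  have [p pH pm] : exists2 p, p \in H & p \notin m.
    apply/subsetPn; apply: contra mH => Hm.
    rewrite eq_sym eqEcard Hm /=; move/andP: um => [/eqP -> _]; by rewrite cH.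
  have : y Q m s \in fset_of B Q m by rewrite -hy //; apply: imset_f.
  move/bigcapP => /(_ p); rewrite inE pm (subsetP (subsetUl H E) p pH) => /(_ isT) yp.
  apply/bigcupP; by exists p.
rewrite S in T; move/addIr: T; by rewrite -xs.
Qed.
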